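(* For any $(\mu,\varphi,\omega^*,\omega^\varepsilon)\in\mathbb F^\times\times\mathbb F^3$: (i) there exists $(a,b,c,\lambda)\in(\mathbb F^\times)^4$ that is feasible for $(\mu,\varphi,\omega^*,\omega^\varepsilon)$; (ii) if $(a,b,c,\lambda)$ is feasible for $(\mu,\varphi,\omega^*,\omega^\varepsilon)$, then the equivalence class of $(a,b,c,\lambda)$ under $\approx$ consists exactly of all elements of $(\mathbb F^\times)^4$ that are feasible for $(\mu,\varphi,\omega^*,\omega^\varepsilon)$.
   Context: $\mathbb F$ is an algebraically closed field and $q\in\mathbb F^\times$ is a root of unity of order $d\notin\{1,2,4\}$. $\sqrt{x}$ denotes a fixed root of $t^2-x$. $(a,b,c,\lambda)\in(\mathbb F^\times)^4$ is feasible for $(\mu,\varphi,\omega^*,\omega^\varepsilon)\in\mathbb F^\times\times\mathbb F^3$ if $\mu=b\lambda^{-1}$, $\varphi=(c+c^{-1})(\lambda-\lambda^{-1})-(a+a^{-1})(bq-b^{-1}q^{-1})$, $\omega^*=(c+c^{-1})(a+a^{-1})+(b+b^{-1})(\lambda q+\lambda^{-1}q^{-1})$, $\omega^\varepsilon=(a+a^{-1})(b+b^{-1})+(c+c^{-1})(\lambda q+\lambda^{-1}q^{-1})$. $\{\pm1\}$ acts on $(\mathbb F^\times)^4$ by $(-1)\cdot(a,b,c,\lambda)=(-a,-b,-c,-\lambda)$; writing $[\cdot]$ for $\{\pm1\}$-orbits, $\mathfrak S_4$ acts on the right on the orbit set by $[a,b,c,\lambda](1\,2)=[a,b,c^{-1},\lambda]$,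 $[a,b,c,\lambda](3\,4)=[a^{-1},b,c,\lambda]$, $[a,b,c,\lambda](2\,3)=[a/s,b/s,c/s,\lambda/s]$ with $s=\sqrt{abc\lambda q}$. $(a,b,c,\lambda)\approx(\bar a,\bar b,\bar c,\bar\lambda)$ means their $\{\pm1\}$-orbits lie in the same $\mathfrak S_4$-orbit. *)

(* Defs.v *)
From HB Require Import structures.
From mathcomp Require Import all_boot all_order all_algebra.
From Stdlib Require Import Relations.Relation_Operators.
Set Implicit Arguments. Unset Strict Implicit. Unset Printing Implicit Defensive.
Import GRing.Theory.
Local Open Scope ring_scope.

Definition quad (F : Type) := (F * F * F * F)%type.

Definition q_a {F} (x : quad F) := x.1.1.1.
Definition q_b {F} (x : quad F) := x.1.1.2.
Definition q_c {F} (x : quad F) := x.1.2.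
Definition q_l {F} (x : quad F) := x.2.

Definition nonzero4 (F : fieldType) (x : quad F) : Prop :=
  [/\ q_a x != 0, q_b x != 0, q_c x != 0 & q_l x != 0].

Definition feasible (F : fieldType) (q : F) (x : quad F)
    (mu phi ws we : F) : Prop :=
  let: (a, b, c, l) := x in
  [/\ mu = b / l,
      phi = (c + c^-1) * (l - l^-1) - (a + a^-1) * (b * q - b^-1 * q^-1),
      ws = (c + c^-1) * (a + a^-1) + (b + b^-1) * (l * q + l^-1 * q^-1)
    & we = (a + a^-1) * (b + b^-1) + (c + c^-1) * (l * q + l^-1 * q^-1)].

(* One generator move of the {±1} x S_4 action on quadruples:
   - the {±1} action (negation of all entries),
   - (1 2): c -> c^-1,
   - (3 4): a -> a^-1,
   - (2 3): divide all entries by a square root s of a b c lambda q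
     (either choice of root; the two choices differ by the {±1} action). *)
Inductive gen_step (F : fieldType) (q : F) : quad F -> quad F -> Prop :=
  | step_neg a b c l : gen_step q (a, b, c, l) (- a, - b, - c, - l)
  | step_12 a b c l : gen_step q (a, b, c, l) (a, b, c^-1, l)
  | step_34 a b c l : gen_step q (a, b, c, l) (a^-1, b, c, l)
  | step_23 a b c l s : s ^+ 2 = a * b * c * l * q ->
      gen_step q (a, b, c, l) (a / s, b / s, c / s, l / s).

(* x ≈ y : the {±1}-orbits of x and y lie in the same S_4-orbit, i.e.
   y is reachable from x by the equivalence closure of the generator moves. *)
Definition approx (F : fieldType) (q : F) : quad F -> quad F -> Prop :=
  clos_refl_sym_trans (quad F) (@gen_step F q).

(* Main.v *)
Require Import Defs.
From HB Require Import structures.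
From mathcomp Require Import all_boot all_order all_algebra ring.
From Stdlib Require Import Relations.Relation_Operators.
Import GRing.Theory.
Local Open Scope ring_scope.
Set Implicit Arguments. Unset Strict Implicit.

Ltac nzs := rewrite ?(mulf_eq0, invr_eq0, oppr_eq0, negb_or, expf_eq0, oner_eq0) /=;
  repeat match goal with H : is_true (_ != 0) |- _ => rewrite H /= end; rewrite ?andbT //.

Section S.
Variable F : closedFieldType.
Variable q : F.
Hypothesis hq0 : q != 0.
Hypothesis hq1 : q ^+ 2 + 1 != 0.

Definition Xq (x : quad F) : quad F :=
  let: (a, b, c, l) := x in (c / l, (c * l)^-1, a * b * q, b * q / a).
Definition s1 (u : quad F) := let: (x1, x2, x3, x4) := u in x1 + x2 + x3 + x4.
Definition s2 (u : quad F) := let: (x1, x2, x3, x4) := u in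
  x1 * x2 + x1 * x3 + x1 * x4 + x2 * x3 + x2 * x4 + x3 * x4.
Definition s3 (u : quad F) := let: (x1, x2, x3, x4) := u in
  x1 * x2 * x3 + x1 * x2 * x4 + x1 * x3 * x4 + x2 * x3 * x4.
Definition muq (x : quad F) := let: (a, b, c, l) := x in b / l.
Definition Inv (x : quad F) : quad F := (muq x, s1 (Xq x), s2 (Xq x), s3 (Xq x)).

Definition E1 (mu phi ws we : F) := (we * q - q ^+ 2 * phi) / (q ^+ 2 + 1).
Definition E3 (mu phi ws we : F) := mu ^+ 2 * (we * q - E1 mu phi ws we).
Definition E2 (mu phi ws we : F) := mu * q * ws - mu ^+ 2 - q ^+ 2.

Lemma feas_char (x : quad F) mu phi ws we : nonzero4 x ->
  feasible q x mu phi ws we <-> Inv x = (mu, E1 mu phi ws we, E2 mu phi ws we, E3 mu phi ws we).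
Proof.
case: x => [[[a b] c] l]; rewrite /nonzero4 /= => -[ha hb hc hl]; split.
  case=> -> -> -> ->; rewrite /Inv /= /E3 /E1 /E2.
  congr (_, _, _, _); field; rewrite ?ha ?hb ?hc ?hl ?hq0 ?hq1 //.
case => Hmu H1 H2 H3; rewrite -Hmu in H1 H2 H3 *.
split => //.
- transitivity ((E3 (b / l) phi ws we / (b/l)^+2) / q ^+ 2 - E1 (b / l) phi ws we).
    rewrite /E3 /E1; field; rewrite ?ha ?hb ?hc ?hl ?hq0 ?hq1 //.
  rewrite -H1 -H3; field; rewrite ?ha ?hb ?hc ?hl ?hq0 ?hq1 //.
- transitivity ((E2 (b / l) phi ws we + (b/l)^+2 + q ^+ 2) / ((b/l) * q)).
    rewrite /E2; field; rewrite ?ha ?hb ?hc ?hl ?hq0 ?hq1 //.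
  rewrite -H2; field; rewrite ?ha ?hb ?hc ?hl ?hq0 ?hq1 //.
- transitivity ((E1 (b / l) phi ws we + E3 (b / l) phi ws we / (b/l)^+2) / q).
    rewrite /E3 /E1; field; rewrite ?ha ?hb ?hc ?hl ?hq0 ?hq1 //.
  rewrite -H1 -H3; field; rewrite ?ha ?hb ?hc ?hl ?hq0 ?hq1 //.
Qed.




Lemma step_inv x y : gen_step q x y ->
  (nonzero4 x <-> nonzero4 y) /\ (nonzero4 x -> Inv x = Inv y).
Proof.
case=> [a b c l|a b c l|a b c l|a b c l s Hs]; rewrite /nonzero4 /q_a /q_b /q_c /q_l /=.
- rewrite !oppr_eq0; split=> // -[ha hb hc hl].
  rewrite /Inv /=; congr (_, _, _, _); field; by rewrite ?oppr_eq0 ?oner_eq0 ?ha ?hb ?hc ?hl ?hq0.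
- rewrite invr_eq0; split=> // -[ha hb hc hl].
  rewrite /Inv /=; congr (_, _, _, _); field; by rewrite ?oppr_eq0 ?oner_eq0 ?ha ?hb ?hc ?hl ?hq0.
- rewrite invr_eq0; split=> // -[ha hb hc hl].
  rewrite /Inv /=; congr (_, _, _, _); field; by rewrite ?oppr_eq0 ?oner_eq0 ?ha ?hb ?hc ?hl ?hq0.
- have Hdiv : forall u, (u / s != 0) = (u != 0) && (s != 0).
    by move=> u; rewrite mulf_eq0 invr_eq0 negb_or.
  have Hs0 : a != 0 -> b != 0 -> c != 0 -> l != 0 -> s != 0.
    move=> ha hb hc hl; apply/eqP => s0; move: Hs; rewrite s0 expr0n /= => /esym/eqP.
    by rewrite !mulf_eq0 (negbTE ha) (negbTE hb) (negbTE hc) (negbTE hl) (negbTE hq0).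
  rewrite !Hdiv; split.
    split.
      case=> ha hb hc hl; have hs := Hs0 ha hb hc hl.
      by split; apply/andP.
    by case=> /andP[-> _] /andP[-> _] /andP[-> _] /andP[-> _].
  case=> ha hb hc hl; have hs := Hs0 ha hb hc hl.
  have Hq : q = s ^+ 2 / (a * b * c * l) by rewrite Hs; field; rewrite ?ha ?hb ?hc ?hl.
  rewrite /Inv /= Hq; congr (_, _, _, _); field; nzs.
Qed.

Lemma approx_inv x y : approx q x y ->
  (nonzero4 x <-> nonzero4 y) /\ (nonzero4 x -> Inv x = Inv y).
Proof.
elim=> {x y} [x y /step_inv //|x|x y _ [IH1 IH2]|x y z _ [IH1 IH2] _ [IH3 IH4]].
- by [].
- split; first by split=> [/IH1|/IH1].
  by move=> /IH1 /IH2 ->.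
- split; first by split=> [/IH1/IH3|/IH3/IH1].
  by move=> hx; rewrite IH2 // IH4 //; apply/IH1.
Qed.


Lemma Xprops x x1 x2 x3 x4 : nonzero4 x -> Xq x = (x1, x2, x3, x4) ->
  [/\ x1 != 0, x2 != 0, x3 != 0 & x4 != 0] /\ x1 * x2 * x3 * x4 = muq x ^+ 2 * q ^+ 2.
Proof.
case: x => [[[a b] c] l]; rewrite /nonzero4 /q_a /q_b /q_c /q_l /= => -[ha hb hc hl] [<- <- <- <-].
split; first by split; nzs.
field; nzs.
Qed.

Lemma mv12 x x1 x2 x3 x4 : nonzero4 x -> Xq x = (x1, x2, x3, x4) ->
  exists y, [/\ approx q x y, nonzero4 y & Xq y = (x2, x1, x3, x4)].
Proof.
case: x => [[[a b] c] l] hnz; have := hnz.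
rewrite /nonzero4 /q_a /q_b /q_c /q_l /= => -[ha hb hc hl] [<- <- <- <-].
exists (a, b, c^-1, l); split.
- by apply: rst_step; constructor.
- by split; rewrite /q_a /q_b /q_c /q_l /= ?invr_eq0.
- rewrite /=; congr (_, _, _, _); field; nzs.
Qed.

Lemma mv34 x x1 x2 x3 x4 : nonzero4 x -> Xq x = (x1, x2, x3, x4) ->
  exists y, [/\ approx q x y, nonzero4 y & Xq y = (x1, x2, x4, x3)].
Proof.
case: x => [[[a b] c] l] hnz; have := hnz.
rewrite /nonzero4 /q_a /q_b /q_c /q_l /= => -[ha hb hc hl] [<- <- <- <-].
exists (a^-1, b, c, l); split.
- by apply: rst_step; constructor.
- by split; rewrite /q_a /q_b /q_c /q_l /= ?invr_eq0.
- rewrite /=; congr (_, _, _, _); field; nzs.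
Qed.

Lemma sqrt_ex (z : F) : exists s, s ^+ 2 = z.
Proof.
have [x Hx] := @solve_monicpoly F 2 (nth 0 [:: z]) isT.
exists x; rewrite Hx !big_ord_recl big_ord0 /= /bump /=; ring.
Qed.

Lemma mv23 x x1 x2 x3 x4 : nonzero4 x -> Xq x = (x1, x2, x3, x4) ->
  exists y, [/\ approx q x y, nonzero4 y & Xq y = (x1, x3, x2, x4)].
Proof.
case: x => [[[a b] c] l] hnz; have := hnz.
rewrite /nonzero4 /q_a /q_b /q_c /q_l /= => -[ha hb hc hl] [<- <- <- <-].
have [s Hs] := sqrt_ex (a * b * c * l * q).
have hs : s != 0.
  apply/eqP => s0; move: Hs; rewrite s0 expr0n /= => /esym/eqP.
  by rewrite !mulf_eq0 (negbTE ha) (negbTE hb) (negbTE hc) (negbTE hl) (negbTE hq0).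
exists (a / s, b / s, c / s, l / s); split.
- by apply: rst_step; constructor.
- by split; rewrite /q_a /q_b /q_c /q_l /=; nzs.
- have Hq : q = s ^+ 2 / (a * b * c * l) by rewrite Hs; field; rewrite ?ha ?hb ?hc ?hl.
  rewrite /= Hq; congr (_, _, _, _); field; nzs.
Qed.


Lemma L4 x y : nonzero4 x -> nonzero4 y -> muq x = muq y -> Xq x = Xq y -> approx q x y.
Proof.
case: x => [[[a b] c] l]; case: y => [[[a' b'] c'] l'].
rewrite /nonzero4 /q_a /q_b /q_c /q_l /= => -[ha hb hc hl] [ha' hb' hc' hl'] Hmu [H1 H2 H3 H4].
have Hl2 : l' ^+ 2 = l ^+ 2.
  transitivity (((c' / l') * (c' * l')^-1)^-1); first by field; nzs.
  rewrite -H1 -H2; field; nzs.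
have : (l' - l) * (l' + l) = 0 by rewrite -subr_sqr Hl2 subrr.
move/eqP; rewrite mulf_eq0 subr_eq0 addr_eq0 => /orP[] /eqP El; subst l'.
- have Ec : c' = c.
    transitivity (c' / l * l); first by field; nzs.
    by rewrite -H1; field; nzs.
  have Eb : b' = b.
    transitivity (b' / l * l); first by field; nzs.
    by rewrite -Hmu; field; nzs.
  subst c' b'.
  have Ea : a' = a.
    transitivity (a' * b * q / (b * q)); first by field; nzs.
    by rewrite -H3; field; nzs.
  subst a'; exact: rst_refl.
- have Ec : c' = - c.
    transitivity (c' / - l * - l); first by field; nzs.
    by rewrite -H1; field; nzs.
  have Eb : b' = - b.
    transitivity (b' / - l * - l); first by field; nzs.
    by rewrite -Hmu; field; nzs.
  subst c' b'.
  have Ea : a' = - a.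
    transitivity (a' * - b * q / (- b * q)); first by field; nzs.
    by rewrite -H3; field; nzs.
  subst a'; apply: rst_step; constructor.
Qed.


Lemma Inv_split x y x1 x2 x3 x4 y1 y2 y3 y4 : nonzero4 x -> nonzero4 y ->
  Xq x = (x1, x2, x3, x4) -> Xq y = (y1, y2, y3, y4) -> Inv x = Inv y ->
  [/\ muq x = muq y, x1 + x2 + x3 + x4 = y1 + y2 + y3 + y4,
   x1 * x2 + x1 * x3 + x1 * x4 + x2 * x3 + x2 * x4 + x3 * x4 =
   y1 * y2 + y1 * y3 + y1 * y4 + y2 * y3 + y2 * y4 + y3 * y4,
   x1 * x2 * x3 + x1 * x2 * x4 + x1 * x3 * x4 + x2 * x3 * x4 =
   y1 * y2 * y3 + y1 * y2 * y4 + y1 * y3 * y4 + y2 * y3 * y4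
  & x1 * x2 * x3 * x4 = y1 * y2 * y3 * y4].
Proof.
move=> hx hy Ex Ey; rewrite /Inv Ex Ey /= => -[Hmu H1 H2 H3]; split => //.
have [_ ->] := Xprops hx Ex; have [_ ->] := Xprops hy Ey; by rewrite Hmu.
Qed.

Lemma L3 x y x1 x2 x3 x4 y3 y4 : nonzero4 x -> nonzero4 y ->
  Xq x = (x1, x2, x3, x4) -> Xq y = (x1, x2, y3, y4) -> Inv x = Inv y -> approx q x y.
Proof.
move=> hx hy Ex Ey HI.
have [Hmu H1 _ _ H4] := Inv_split hx hy Ex Ey HI.
have [[n1 n2 n3 n4] _] := Xprops hx Ex.
have Hs : x3 + x4 = y3 + y4.
  transitivity (x1 + x2 + x3 + x4 - x1 - x2); first by ring.
  by rewrite H1; ring.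
have Hp : x3 * x4 = y3 * y4.
  transitivity (x1 * x2 * x3 * x4 / (x1 * x2)); first by field; nzs.
  by rewrite H4; field; nzs.
have : (y3 - x3) * (y3 - x4) = 0.
  transitivity (y3 ^+ 2 - (x3 + x4) * y3 + x3 * x4); first by ring.
  by rewrite Hs Hp; ring.
move/eqP; rewrite mulf_eq0 !subr_eq0 => /orP[] /eqP E.
- have E4 : y4 = x4.
    transitivity (y3 + y4 - y3); first by ring.
    by rewrite -Hs E; ring.
  apply: L4 => //.
  by rewrite Ex Ey E E4.
- have E4 : y4 = x3.
    transitivity (y3 + y4 - y3); first by ring.
    by rewrite -Hs E; ring.
  have [x' [Hxx' hx' Ex']] := mv34 hx Ex.
  have [_ /(_ hx) Hi] := approx_inv Hxx'.
  apply: rst_trans Hxx' _; apply: L4 => //.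
    by move: HI; rewrite Hi => -[].
  by rewrite Ex' Ey E E4.
Qed.


Lemma atr x y z : approx q x y -> approx q y z -> approx q x z.
Proof. exact: rst_trans. Qed.

Lemma tr x x' y : approx q x x' -> nonzero4 x -> Inv x = Inv y ->
  nonzero4 x' /\ Inv x' = Inv y.
Proof. by move=> /approx_inv [H1 H2] hx HI; split; [apply/H1 | rewrite -H2]. Qed.

Lemma L2 x y x1 x2 x3 x4 y2 y3 y4 : nonzero4 x -> nonzero4 y ->
  Xq x = (x1, x2, x3, x4) -> Xq y = (x1, y2, y3, y4) -> Inv x = Inv y -> approx q x y.
Proof.
move=> hx hy Ex Ey HI.
have [Hmu H1 H2 _ H4] := Inv_split hx hy Ex Ey HI.
have [[n1 n2 n3 n4] _] := Xprops hx Ex.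
have Hs : x2 + x3 + x4 = y2 + y3 + y4.
  transitivity (x1 + x2 + x3 + x4 - x1); first by ring.
  by rewrite H1; ring.
have Hm : x2 * x3 + x2 * x4 + x3 * x4 = y2 * y3 + y2 * y4 + y3 * y4.
  transitivity (x1 * x2 + x1 * x3 + x1 * x4 + x2 * x3 + x2 * x4 + x3 * x4
     - x1 * (x2 + x3 + x4)); first by ring.
  by rewrite H2 Hs; ring.
have Hp : x2 * x3 * x4 = y2 * y3 * y4.
  transitivity (x1 * x2 * x3 * x4 / x1); first by field; nzs.
  by rewrite H4; field; nzs.
have : (y2 - x2) * (y2 - x3) * (y2 - x4) = 0.
  transitivity (y2 ^+ 3 - (x2 + x3 + x4) * y2 ^+ 2
     + (x2 * x3 + x2 * x4 + x3 * x4) * y2 - x2 * x3 * x4); first by ring.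
  by rewrite Hs Hm Hp; ring.
move/eqP; rewrite !mulf_eq0 !subr_eq0 => /orP[/orP[]|] /eqP E; rewrite E in Ey.
- exact: L3 hx hy Ex Ey HI.
- have [x' [Hxx' hx' Ex']] := mv23 hx Ex.
  have [_ HI'] := tr Hxx' hx HI.
  exact: atr Hxx' (L3 hx' hy Ex' Ey HI').
- have [x' [Hxx' hx' Ex']] := mv34 hx Ex.
  have [x'' [Hx'x'' hx'' Ex'']] := mv23 hx' Ex'.
  have Hxx'' := atr Hxx' Hx'x''.
  have [_ HI''] := tr Hxx'' hx HI.
  exact: atr Hxx'' (L3 hx'' hy Ex'' Ey HI'').
Qed.

Lemma L1 x y : nonzero4 x -> nonzero4 y -> Inv x = Inv y -> approx q x y.
Proof.
move=> hx hy HI.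
case Ex: (Xq x) => [[[x1 x2] x3] x4]; case Ey: (Xq y) => [[[y1 y2] y3] y4].
have [Hmu H1 H2 H3 H4] := Inv_split hx hy Ex Ey HI.
have : (y1 - x1) * (y1 - x2) * (y1 - x3) * (y1 - x4) = 0.
  transitivity (y1 ^+ 4 - (x1 + x2 + x3 + x4) * y1 ^+ 3
    + (x1 * x2 + x1 * x3 + x1 * x4 + x2 * x3 + x2 * x4 + x3 * x4) * y1 ^+ 2
    - (x1 * x2 * x3 + x1 * x2 * x4 + x1 * x3 * x4 + x2 * x3 * x4) * y1
    + x1 * x2 * x3 * x4); first by ring.
  by rewrite H1 H2 H3 H4; ring.
move/eqP; rewrite !mulf_eq0 !subr_eq0 => /orP[/orP[/orP[]|]|] /eqP E; rewrite E in Ey.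
- exact: L2 hx hy Ex Ey HI.
- have [x' [Hxx' hx' Ex']] := mv12 hx Ex.
  have [_ HI'] := tr Hxx' hx HI.
  exact: atr Hxx' (L2 hx' hy Ex' Ey HI').
- have [x' [Hxx' hx' Ex']] := mv23 hx Ex.
  have [x'' [Hx'x'' hx'' Ex'']] := mv12 hx' Ex'.
  have Hxx'' := atr Hxx' Hx'x''.
  have [_ HI''] := tr Hxx'' hx HI.
  exact: atr Hxx'' (L2 hx'' hy Ex'' Ey HI'').
- have [x' [Hxx' hx' Ex']] := mv34 hx Ex.
  have [x'' [Hx'x'' hx'' Ex'']] := mv23 hx' Ex'.
  have [x3' [Hx''x3 hx3 Ex3]] := mv12 hx'' Ex''.
  have Hxx3 := atr (atr Hxx' Hx'x'') Hx''x3.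
  have [_ HI3] := tr Hxx3 hx HI.
  exact: atr Hxx3 (L2 hx3 hy Ex3 Ey HI3).
Qed.

End S.

Section Fac.
Variable F : closedFieldType.

Lemma root2 (c0 c1 : F) : exists x, x ^+ 2 = c0 + c1 * x.
Proof.
have [x Hx] := @solve_monicpoly F 2 (nth 0 [:: c0; c1]) isT.
exists x; rewrite Hx !big_ord_recl big_ord0 /= /bump /=; ring.
Qed.
Lemma root3 (c0 c1 c2 : F) : exists x, x ^+ 3 = c0 + c1 * x + c2 * x ^+ 2.
Proof.
have [x Hx] := @solve_monicpoly F 3 (nth 0 [:: c0; c1; c2]) isT.
exists x; rewrite Hx !big_ord_recl big_ord0 /= /bump /=; ring.
Qed.
Lemma root4 (c0 c1 c2 c3 : F) : exists x, x ^+ 4 = c0 + c1 * x + c2 * x ^+ 2 + c3 * x ^+ 3.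
Proof.
have [x Hx] := @solve_monicpoly F 4 (nth 0 [:: c0; c1; c2; c3]) isT.
exists x; rewrite Hx !big_ord_recl big_ord0 /= /bump /=; ring.
Qed.

Lemma factor2 (f1 f2 : F) : exists x1 x2, f1 = x1 + x2 /\ f2 = x1 * x2.
Proof.
have [r Hr] := root2 (- f2) f1.
exists r, (f1 - r); split; first by ring.
transitivity (f1 * r - r ^+ 2); last by ring.
by rewrite Hr; ring.
Qed.

Lemma factor3 (f1 f2 f3 : F) : exists x1 x2 x3,
  [/\ f1 = x1 + x2 + x3, f2 = x1 * x2 + x1 * x3 + x2 * x3 & f3 = x1 * x2 * x3].
Proof.
have [r Hr] := root3 f3 (- f2) f1.
have [y1 [y2 [Hg1 Hg2]]] := factor2 (f1 - r) (f2 - r * (f1 - r)).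
exists r, y1, y2; split.
- transitivity (r + (f1 - r)); first by ring.
  by rewrite Hg1; ring.
- transitivity (r * (f1 - r) + (f2 - r * (f1 - r))); first by ring.
  by rewrite Hg2 Hg1; ring.
- transitivity (r * (f2 - r * (f1 - r))); last by rewrite Hg2; ring.
  have -> : r * (f2 - r * (f1 - r)) = r ^+ 3 + f2 * r - f1 * r ^+ 2 by ring.
  by rewrite Hr; ring.
Qed.

Lemma factor4 (f1 f2 f3 f4 : F) : exists x1 x2 x3 x4,
  [/\ f1 = x1 + x2 + x3 + x4,
      f2 = x1 * x2 + x1 * x3 + x1 * x4 + x2 * x3 + x2 * x4 + x3 * x4,
      f3 = x1 * x2 * x3 + x1 * x2 * x4 + x1 * x3 * x4 + x2 * x3 * x4
    & f4 = x1 * x2 * x3 * x4].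
Proof.
have [r Hr] := root4 (- f4) f3 (- f2) f1.
have [y1 [y2 [y3 [Hh1 Hh2 Hh3]]]] :=
  factor3 (f1 - r) (f2 - r * (f1 - r)) (f3 - r * (f2 - r * (f1 - r))).
exists r, y1, y2, y3; split.
- transitivity (r + (f1 - r)); first by ring.
  by rewrite Hh1; ring.
- transitivity (r * (f1 - r) + (f2 - r * (f1 - r))); first by ring.
  by rewrite Hh2 Hh1; ring.
- transitivity (r * (f2 - r * (f1 - r)) + (f3 - r * (f2 - r * (f1 - r)))); first by ring.
  by rewrite Hh3 Hh2; ring.
- transitivity (r * (f3 - r * (f2 - r * (f1 - r)))); last by rewrite Hh3; ring.
  have -> : r * (f3 - r * (f2 - r * (f1 - r))) =
     - r ^+ 4 + f3 * r - f2 * r ^+ 2 + f1 * r ^+ 3 by ring.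
  by rewrite Hr; ring.
Qed.
End Fac.

Theorem theorem5p2 (F : closedFieldType) (q : F) (d : nat)
    (hq : d.-primitive_root q) (hd : d \notin [:: 1%N; 2%N; 4%N])
    (mu phi ws we : F) (hmu : mu != 0) :
  (exists x : quad F, nonzero4 x /\ feasible q x mu phi ws we) /\
  (forall x : quad F, nonzero4 x -> feasible q x mu phi ws we ->
     forall y : quad F, nonzero4 y ->
       (approx q x y <-> feasible q y mu phi ws we)).
Proof.
have d0 := prim_order_gt0 hq.
have hq0 : q != 0.
  apply/eqP => q0; have := prim_expr_order hq; rewrite q0 expr0n.
  by case: d d0 {hq hd} => // n _ /= /eqP; rewrite eq_sym oner_eq0.
have hq1 : q ^+ 2 + 1 != 0.
  apply/eqP => Hq2.
  have : q ^+ 4 == 1.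
    have -> : q ^+ 4 = (q ^+ 2 + 1) * (q ^+ 2 - 1) + 1 by ring.
    by rewrite Hq2 mul0r add0r.
  rewrite -(prim_order_dvd hq) => Hd4.
  have := @dvdn_leq d 4 isT Hd4; move: Hd4 hd.
  by case: (d) => [|[|[|[|[|n]]]]].
split.
- have [x1 [x2 [x3 [x4 [HE1 HE2 HE3 HE4]]]]] :=
    factor4 (E1 q mu phi ws we) (E2 q mu phi ws we) (E3 q mu phi ws we) (mu ^+ 2 * q ^+ 2).
  have hprod : x1 * x2 * x3 * x4 != 0 by rewrite -HE4; nzs.
  move: (hprod); rewrite !mulf_eq0 !negb_or => /andP[/andP[/andP[n1 n2] n3] n4].
  have [l Hl] := sqrt_ex ((x1 * x2)^-1).
  have hl : l != 0.
    apply/eqP => l0; move: Hl; rewrite l0 expr0n /= => /esym/eqP.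
    by rewrite invr_eq0 mulf_eq0 (negbTE n1) (negbTE n2).
  pose x := (x3 / (mu * l * q), mu * l, x1 * l, l).
  have hx : nonzero4 x by split; rewrite /q_a /q_b /q_c /q_l /=; nzs.
  have Ex : Xq q x = (x1, x2, x3, x4).
    rewrite /x /=; congr (_, _, _, _).
    + field; nzs.
    + have -> : x1 * l * l = x1 * l ^+ 2 by ring.
      rewrite Hl; field; nzs.
    + field; nzs.
    + transitivity (mu ^+ 2 * q ^+ 2 * l ^+ 2 / x3); first by field; nzs.
      rewrite Hl HE4; field; nzs.
  exists x; split => //.
  apply/(feas_char hq0 hq1 _ _ _ _ hx).
  rewrite /Inv Ex /=; congr (_, _, _, _).
  + field; nzs.
  + by rewrite HE1.
  + by rewrite HE2.
  + by rewrite HE3.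
- move=> x hx Hfx y hy.
  have HIx := (feas_char hq0 hq1 _ _ _ _ hx).1 Hfx.
  split.
  + move=> Hxy; have [_ /(_ hx) HI] := approx_inv hq0 Hxy.
    by apply/(feas_char hq0 hq1 _ _ _ _ hy); rewrite -HI.
  + move=> /(feas_char hq0 hq1 _ _ _ _ hy) HIy.
    by apply: (L1 hq0 hx hy); rewrite HIx HIy.
Qed.
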